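(* Let $r\ge 2$ be an integer, let $\varphi$ be an instance of 2-Clause 3-SAT, and let $G(\varphi)$ be the graph constructed from $\varphi$ and $r$ as described in the context. If $\varphi$ is satisfiable, then $\mathrm{col}_r(G(\varphi)) \leq 6$.
   Context: 2-Clause 3-SAT: given a CNF formula $\varphi$ with clauses $c_1,\dots,c_m$ over variables $x_1,\dots,x_n$ in which each clause contains at most 3 literals and each literal ($x_j$ or $\overline{x}_j$) appears in exactly 2 clauses, decide whether $\varphi$ is satisfiable. It is assumed throughout that no variable appears twice in a single clause and there are no single-literal clauses (so each clause has 2 or 3 literals). An $\ell$-subdivided edge between $a$ and $b$ is an induced path with $\ell$ internal vertices (subdivision vertices) joining $a$ and $b$, whose internal vertices have no other neighbors. Construction of $G(\varphi)$: for each clause $c_i$ create a vertex $u_i$. For each variable $x_j$ create two vertices $v_j,v'_j$ (for literals $x_j$, $\overline{x}_j$) joined by an edge. For each clause $c_i$ containing literal $x_j$ (resp. $\overline{x}_j$), join $u_i$ and $v_j$ (resp. $v'_j$) by an $(r-1)$-subdivided edge. Add a 7-clique on new vertices $w_1,\dots,w_7$. For each clause $c_i$ add edges from $u_i$ to $w_1,\dots,w_4$, and if $c_i$ has only 2 literals also an edge from $u_i$ to $w_5$. For each variable $x_j$ add edges from $v_j$ to $w_2,w_3,w_4$ and from $v'_j$ to $w_5,w_6,w_7$. Coloring numbers: for a graph $G=(V,E)$ and a total order $\sigma$ of $V$, a vertex $v\neq u$ is $r$-reachable from $u$ if $u<_\sigma v$ and there is a $u$–$v$ path of length at most $r$ all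 of whose vertices other than $u,v$ precede $u$ in $\sigma$; $\mathrm{reach}_r(u,G_\sigma)$ is the set of such $v$, and $\mathrm{col}_r(G)=\min_\sigma\max_u|\mathrm{reach}_r(u,G_\sigma)|$ over all total orders $\sigma$ of $V$. *)

(* Defs.v *)
From mathcomp Require Import all_boot fingroup perm.
Set Implicit Arguments. Unset Strict Implicit. Unset Printing Implicit Defensive.

(* A total order sigma of A is encoded by a permutation
   o of T: x <_o y  iff  rk o x < rk o y. *)

Definition rk (T : finType) (o : {perm T}) (x : T) : nat := enum_rank (o x).

(* v is r-reachable from u w.r.t. o: u <_o v and there is a u-v path of length
   at most r (k internal vertices, k < r) all of whose internal vertices lie in A
   and precede u. *)
Definition reachb (T : finType) (A : {set T}) (adj : rel T) (r : nat)
    (o : {perm T}) (u v : T) : bool :=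
  [&& u \in A, v \in A, v != u, rk o u < rk o v &
   [exists k : 'I_r, exists p : k.-tuple T,
     [&& path adj u (rcons p v),
         all (fun w => (w \in A) && (rk o w < rk o u)) p &
         uniq (u :: rcons p v)]]].

Definition reach_set (T : finType) (A : {set T}) (adj : rel T) (r : nat)
    (o : {perm T}) (u : T) : {set T} :=
  [set v | reachb A adj r o u v].

Definition wcol_of (T : finType) (A : {set T}) (adj : rel T) (r : nat)
    (o : {perm T}) : nat :=
  \max_(u in A) #|reach_set A adj r o u|.

Definition colnum (T : finType) (A : {set T}) (adj : rel T) (r : nat) : nat :=
  wcol_of A adj r [arg min_(o < (1%g : {perm T})) wcol_of A adj r o].

(* A literal over n variables: (j, true) is x_j, (j, false) is the negation. *)
Definition lit (n : nat) := ('I_n * bool)%type.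

Definition two_clause_3sat (n m : nat) (cl : 'I_m -> seq (lit n)) : Prop :=
  [/\ forall i, 2 <= size (cl i) <= 3,
      forall i, uniq (map fst (cl i)) &
      forall l : lit n, #|[set i | l \in cl i]| = 2].

Definition satisfiable (n m : nat) (cl : 'I_m -> seq (lit n)) : Prop :=
  exists a : 'I_n -> bool, forall i, has (fun l : lit n => a l.1 == l.2) (cl i).

(* Vertices: U i  (inl (inl (inl i))),   V (j,b) (inl (inl (inr (j,b)))),
   subdivision vertex number k (0-based, k < r-1) on the path u_i -> literal l:
   inl (inr (i, l, k)),   clique vertex w_{k+1}: inr k. *)
Definition gvtx (n m r : nat) : finType :=
  ('I_m + lit n + ('I_m * lit n * 'I_r.-1) + 'I_7)%type.

Definition gvset (n m r : nat) (cl : 'I_m -> seq (lit n)) : {set gvtx n m r} :=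
  [set x : gvtx n m r | match x with
                        | inl (inr (i, l, _)) => l \in cl i
                        | _ => true end].

(* one direction of each edge *)
Definition gedge0 (n m r : nat) (cl : 'I_m -> seq (lit n))
    (x y : gvtx n m r) : bool :=
  match x, y with
  | inl (inl (inl i)), inl (inr (i', l, k)) =>
      [&& i == i', l \in cl i & val k == 0]
  | inl (inr (i, l, k)), inl (inr (i', l', k')) =>
      [&& i == i', l == l', l \in cl i & val k' == (val k).+1]
  | inl (inr (i, l, k)), inl (inl (inr l')) =>
      [&& l == l', l \in cl i & (val k).+1 == r.-1]
  (* direct edge when r - 1 = 0 (not used since r >= 2) *)
  | inl (inl (inl i)), inl (inl (inr l)) => (l \in cl i) && (r.-1 == 0)
  | inl (inl (inr (j, true))), inl (inl (inr (j', false))) => j == j'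
  | inr a, inr b => a != b
  (* u_i -- w_1..w_4, and w_5 if c_i has 2 literals *)
  | inl (inl (inl i)), inr k =>
      (val k < 4) || ((val k == 4) && (size (cl i) == 2))
  (* v_j -- w_2,w_3,w_4 ;  v'_j -- w_5,w_6,w_7 *)
  | inl (inl (inr (_, b))), inr k =>
      if b then (1 <= val k <= 3) else (4 <= val k <= 6)
  | _, _ => false
  end.

Definition gadj (n m r : nat) (cl : 'I_m -> seq (lit n)) : rel (gvtx n m r) :=
  fun x y => gedge0 cl x y || gedge0 cl y x.

(* Main.v *)
Require Import Defs.
From mathcomp Require Import all_boot fingroup perm.
From mathcomp Require Import zify.
Set Implicit Arguments. Unset Strict Implicit. Unset Printing Implicit Defensive.


Lemma perm_of_key (T : finType) (f : T -> nat) :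
  exists o : {perm T}, forall x y, f x < f y -> rk o x < rk o y.
Proof.
pose leT := fun x y : T => f x <= f y.
pose s := sort leT (enum T).
have ss : size s = #|T| by rewrite size_sort cardE.
have ins : forall x, x \in s by move=> x; rewrite mem_sort mem_enum.
have hlt : forall x, index x s < #|T| by move=> x; rewrite -ss index_mem.
pose h := fun x => enum_val (Ordinal (hlt x)).
have hinj : injective h.
  move=> x y /enum_val_inj /(congr1 val) /= E.
  by apply: (index_inj x (ins x) (ins y)).
exists (perm hinj) => x y fxy.
rewrite /rk !permE /h !enum_valK /=.
rewrite ltnNge; apply/negP => le.
have srt : sorted leT s.
  by apply: sort_sorted => a b; rewrite /leT leq_total.
have tr : transitive leT by move=> a b c; rewrite /leT; exact: leq_trans.
have rf : reflexive leT by move=> a; exact: leqnn.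
have := sorted_leq_nth tr rf x srt.
move=> /(_ (index y s) (index x s)).
rewrite !inE !index_mem !ins !nth_index // => /(_ isT isT le).
by rewrite /leT leqNgt fxy.
Qed.

Lemma reach_sub (T : finType) (A : {set T}) (adj : rel T) (r : nat)
    (o : {perm T}) (u v : T) (I : nat -> T -> Prop) :
  I 0 u ->
  (forall t x y, t.+1 < r -> I t x -> adj x y -> y \in A -> rk o y < rk o u ->
     I t.+1 y) ->
  reachb A adj r o u v ->
  [/\ v \in A, v != u, rk o u < rk o v &
      exists t x, [/\ t < r, I t x & adj x v]].
Proof.
move=> I0 Istep /and5P [uA vA vu ruv /existsP [k /existsP [p /and3P [pth pall _]]]].
split => //.
have : 0 + size p < r by rewrite size_tuple ltn_ord.
move: (tval p) pth pall => q.
have claim : forall t x, I t x -> path adj x (rcons q v) ->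
   all (fun w : T => (w \in A) && (rk o w < rk o u)) q -> t + size q < r ->
   exists t x, [/\ t < r, I t x & adj x v].
  elim: q => [|y q IH] t x It /=.
  by rewrite andbT addn0 => axv _ tr; exists t, x.
move=> /andP [axy pth] /andP [/andP [yA yu] qall] tr.
apply: (IH t.+1 y) => //; last by rewrite addSnnS.
apply: (Istep t x y) => //.
by apply: leq_ltn_trans tr; rewrite addnS ltnS leq_addr.
by move=> pth pall lt; apply: (claim 0 u).
Qed.

Lemma colnum_le (T : finType) (A : {set T}) (adj : rel T) (r : nat) (o : {perm T}) b :
  (forall u, u \in A -> #|reach_set A adj r o u| <= b) ->
  colnum A adj r <= b.
Proof.
move=> H; rewrite /colnum.
case: arg_minnP => // o' _ Hmin.
apply: leq_trans (Hmin o isT) _.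
by apply/bigmax_leqP.
Qed.

Section G.
Variables (n m r' : nat) (cl : 'I_m -> seq (lit n)).
Local Notation r := r'.+2.
Local Notation T := (gvtx n m r).
Definition U i : T := inl (inl (inl i)).
Definition V l : T := inl (inl (inr l)).
Definition S i l (k : 'I_r'.+1) : T := inl (inr (i,l,k)).
Definition W k : T := inr k.
Definition negl (l : lit n) : lit n := (l.1, ~~ l.2).
Definition wV (b : bool) (w : 'I_7) := if b then 1 <= w <= 3 else 4 <= w <= 6.
Local Notation adj := (@gadj n m r cl).

Lemma adjS i l j y : adj (S i l j) y ->
  l \in cl i /\
  [\/ y = U i /\ val j = 0, y = V l /\ val j = r'
    | exists j', y = S i l j' /\ ((val j').+1 = val j \/ (val j).+1 = val j')].
Proof.
case: y => [[[i'|[j' b']]|[[i' [j' b']] k']]|w];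
  rewrite /gadj /S /U /V /=.
- by case/and3P => /eqP-> H /eqP H0; split=>//; constructor 1.
- rewrite (_ : (if b' then false else false) = false) ?orbF; last by case: b'.
  by case/and3P => /eqP <- H /eqP [H0]; split=>//; constructor 2.
- case/orP => /and4P [/eqP<- /eqP<- H /eqP E]; split => //; constructor 3;
    exists k'; split => //; [right|left]; by rewrite E.
- by [].
Qed.

Lemma adjV l y : adj (V l) y ->
  [\/ y = V (negl l), exists i j, [/\ y = S i l j, l \in cl i & val j = r']
    | exists w, y = W w /\ wV l.2 w].
Proof.
case: l => j b.
case: y => [[[i'|[j' b']]|[[i' [j' b']] k']]|w];
  rewrite /gadj /S /U /V /W /negl /wV /=.
- by case: b => //=; rewrite andbF.
- by case: b; case: b' => //=; rewrite ?orbF => /eqP ->; constructor 1.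
- rewrite (_ : (if b then false else false) = false) //; last by case: b.
  by case/and3P => /eqP [<- <-] H /eqP [E]; constructor 2; exists i', k'; split.
- by move=> H; constructor 3; exists w; split => //; case: b H; rewrite orbF.
Qed.

Lemma adjU i y : adj (U i) y ->
  (exists l j, [/\ y = S i l j, l \in cl i & val j = 0]) \/
  (exists w, y = W w /\ ((val w < 4) || ((val w == 4) && (size (cl i) == 2)))).
Proof.
case: y => [[[i'|[j' b']]|[[i' [j' b']] k']]|w];
  rewrite /gadj /S /U /V /W /=.
- by [].
- by rewrite andbF; case: b'.
- by rewrite orbF => /and3P [/eqP <- H /eqP E]; left; exists (j', b'), k'.
- by rewrite orbF => H; right; exists w.
Qed.

Definition Wl (s : seq nat) : seq T := [seq W (inord k) | k <- s].
Lemma Wl_size s : size (Wl s) = size s. Proof. by rewrite size_map. Qed.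
Lemma Wl_mem s (w : 'I_7) : val w \in s -> W w \in Wl s.
Proof. by move=> H; rewrite -[w]inord_val; apply: map_f. Qed.

Definition Wlist (b : bool) : seq T := Wl (if b then [:: 1;2;3] else [:: 4;5;6]).
Lemma Wlist_size b : size (Wlist b) = 3. Proof. by rewrite Wl_size; case: b. Qed.
Lemma Wlist_mem b w : wV b w -> W w \in Wlist b.
Proof.
move=> H; apply: Wl_mem; move: H; rewrite /wV.
by case: b; case: w => [[|[|[|[|[|[|[|?]]]]]]] Hw].
Qed.

Definition WUlist (b : bool) : seq T := Wl ([:: 0;1;2;3] ++ (if b then [:: 4] else [::])).
Lemma WUlist_size b : size (WUlist b) = 4 + b. Proof. by rewrite Wl_size; case: b. Qed.
Lemma WUlist_mem b (w : 'I_7) : (val w < 4) || ((val w == 4) && b) -> W w \in WUlist b.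
Proof.
move=> H; apply: Wl_mem; move: H.
by case: b; case: w => [[|[|[|[|[|[|[|?]]]]]]] Hw].
Qed.

End G.
Section B.
Variables (n m r' : nat) (cl : 'I_m -> seq (lit n)) (a : 'I_n -> bool).
Local Notation r := r'.+2.
Local Notation T := (gvtx n m r).
Local Notation adj := (@gadj n m r cl).
Local Notation A := (@gvset n m r cl).
Local Notation Uv := (@U n m r').
Local Notation Vv := (@V n m r').
Local Notation Sv := (@S n m r').
Local Notation Wv := (@W n m r').

Definition tr (l : lit n) := a l.1 == l.2.
Definition key (x : T) : nat :=
  match x with
  | inl (inl (inl _)) => r'.+3
  | inl (inl (inr l)) => if tr l then r'.+2 else r'.+4
  | inl (inr (_, _, k)) => nat_of_ord k
  | inr _ => r'.+4.+1
  end.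

Variable o : {perm T}.
Hypothesis Ho : forall x y, key x < key y -> rk o x < rk o y.

Lemma earlier x y : rk o x < rk o y -> key x <= key y.
Proof. by move=> H; rewrite leqNgt; apply/negP => /Ho; rewrite ltnNge ltnW. Qed.

Lemma keyV l : key (Vv l) = if tr l then r'.+2 else r'.+4. Proof. by []. Qed.
Lemma keyU i : key (Uv i) = r'.+3. Proof. by []. Qed.
Lemma keyS i l j : key (Sv i l j) = nat_of_ord j. Proof. by []. Qed.
Lemma keyW w : key (Wv w) = r'.+4.+1. Proof. by []. Qed.

Lemma tr_neg (l : lit n) : tr (negl l) = ~~ tr l.
Proof. by rewrite /tr /negl /=; case: (a l.1); case: l.2. Qed.
Lemma negl_neg (l : lit n) : negl (negl l) = l.
Proof. by case: l => j b; rewrite /negl /= negbK. Qed.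

Lemma card_le_seq (X : {set T}) (s : seq T) :
  (forall v, v \in X -> v \in s) -> #|X| <= size s.
Proof. by move=> H; apply: leq_trans (card_size s); apply/subset_leq_card/subsetP. Qed.


Lemma ordS (k : 'I_r'.+1) : @nat_of_ord r'.+1 k < r'.+1.
Proof. exact: ltn_ord. Qed.

Lemma boundW w : #|reach_set A adj r o (Wv w)| <= 6.
Proof.
pose s := [seq Wv x | x <- enum (predC1 w)].
have -> : 6 = size s by rewrite size_map -cardE cardC1 card_ord.
apply: card_le_seq => v; rewrite inE => /and5P [_ _ vu ruv _].
have := earlier ruv; rewrite keyW.
case: v vu ruv => [[[i|l]|[[i l] k]]|x] //= vu _.
- by intros; exfalso; lia.
- by case: (tr _); intros; exfalso; lia.
- by have := ordS k; intros; exfalso; lia.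
- by move=> _; apply: map_f; rewrite mem_enum inE; apply: contra vu => /eqP ->.
Qed.

Lemma boundS i l k : #|reach_set A adj r o (Sv i l k)| <= 6.
Proof.
apply: (@leq_trans 3); last by [].
have -> : 3 = size [:: Uv i; Vv l; Sv i l (inord k.+1)] by [].
apply: card_le_seq => v; rewrite inE.
pose I := fun (t:nat) (x:T) => exists j : 'I_r'.+1, x = Sv i l j /\ j <= k.
have I0 : I 0 (Sv i l k) by exists k.
have step : forall t x y, t.+1 < r -> I t x -> adj x y -> y \in A ->
    rk o y < rk o (Sv i l k) -> I t.+1 y.
  move=> t x y _ [j [-> jk]] /adjS [_ [[-> _]|[-> _]|[j' [-> _]]]] _ /earlier.
  - rewrite keyU keyS; have := ordS k; lia.
  - rewrite keyV keyS; have := ordS k; case: (tr _); lia.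
  - by rewrite !keyS => H; exists j'.
move=> /(reach_sub I0 step) [_ vu ruv [t [x [_ [j [-> jk]] /adjS [_ [[? _]|[? _]|[j' [? hj]]]]]]]]; subst v.
- by rewrite mem_head.
- by rewrite in_cons mem_head orbT.
- have := earlier ruv; rewrite !keyS => kj'.
  have [ej|nej] := eqVneq (nat_of_ord j') (nat_of_ord k).
    by move: vu; rewrite (val_inj ej) eqxx.
  have e : j' = inord k.+1 :> 'I_r'.+1.
    have hj' : (nat_of_ord j').+1 = nat_of_ord j \/ (nat_of_ord j).+1 = nat_of_ord j' := hj.
    have := ordS j'; move=> hj2.
    apply: val_inj; rewrite /= inordK; lia.
  by rewrite e !in_cons eqxx !orbT.
Qed.


Ltac kc := intros; exfalso; lia.

Lemma boundVt l (Hl : tr l) (h3 : #|[set i | l \in cl i]| = 2) :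
  #|reach_set A adj r o (Vv l)| <= 6.
Proof.
have -> : 6 = size ([seq Uv i | i <- enum [set i | l \in cl i]] ++ Vv (negl l) :: Wlist n m r' l.2).
  by rewrite size_cat size_map -cardE h3 /= Wlist_size.
apply: card_le_seq => v; rewrite inE.
pose I := fun (t:nat) (x:T) => x = Vv l \/ exists i j, x = Sv i l j /\ l \in cl i.
have I0 : I 0 (Vv l) by left.
have step : forall t x y, t.+1 < r -> I t x -> adj x y -> y \in A ->
    rk o y < rk o (Vv l) -> I t.+1 y.
  move=> t x y _ [->|[i [j [-> li]]]].
  - move=> /adjV [->|[i [j [-> li _]]]|[w [-> _]]] _ /earlier.
    + by rewrite !keyV tr_neg Hl /=; kc.
    + by right; exists i, j.
    + by rewrite keyW keyV Hl; kc.
  - move=> /adjS [_ [[-> _]|[-> _]|[j' [-> _]]]] _ /earlier.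
    + by rewrite keyU keyV Hl; kc.
    + by left.
    + by right; exists i, j'.
move=> /(reach_sub I0 step) [_ vu ruv [t [x [_ Ix axv]]]].
have kv := earlier ruv; rewrite keyV Hl in kv.
case: Ix axv => [->|[i [j [-> li]]]].
- move=> /adjV [?|[i [j [? _ _]]]|[w [? hw]]]; subst v.
  + by rewrite mem_cat in_cons eqxx orbT.
  + by rewrite keyS in kv; have := ordS j; kc.
  + by rewrite mem_cat in_cons; apply/orP; right; apply/orP; right; apply: Wlist_mem.
- move=> /adjS [_ [[? _]|[? _]|[j' [? _]]]]; subst v.
  + by rewrite mem_cat map_f // mem_enum inE.
  + by rewrite eqxx in vu.
  + by rewrite keyS in kv; have := ordS j'; kc.
Qed.


Lemma boundVf l (Hl : ~~ tr l) : #|reach_set A adj r o (Vv l)| <= 6.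
Proof.
have Hl' := negbTE Hl.
have Hn : tr (negl l) by rewrite tr_neg.
have -> : 6 = size (Wlist n m r' true ++ Wlist n m r' false) by rewrite size_cat !Wlist_size.
apply: card_le_seq => v; rewrite inE.
pose I := fun (t:nat) (x:T) => [\/ x = Vv l, x = Vv (negl l) /\ 0 < t,
   exists i j, x = Sv i l j /\ r'.+1 <= nat_of_ord j + t
 | exists i j, x = Sv i (negl l) j /\ r'.+2 <= nat_of_ord j + t].
have I0 : I 0 (Vv l) by constructor 1.
have step : forall t x y, t.+1 < r -> I t x -> adj x y -> y \in A ->
    rk o y < rk o (Vv l) -> I t.+1 y.
  move=> t x y tr' [->|[-> t0]|[i [j [-> jt]]]|[i [j [-> jt]]]].
  - move=> /adjV [->|[i [j [-> _ jr]]]|[w [-> _]]] _ /earlier.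
    + by constructor 2.
    + by move=> _; constructor 3; exists i, j; split=>//; move: jr => /= ->; lia.
    + by rewrite keyW keyV Hl'; kc.
  - move=> /adjV [->|[i [j [-> _ jr]]]|[w [-> _]]] _ /earlier.
    + by rewrite negl_neg; constructor 1.
    + by move=> _; constructor 4; exists i, j; split=>//; move: jr => /= ->; lia.
    + by rewrite keyW keyV Hl'; kc.
  - move=> /adjS [_ [[-> j0]|[-> _]|[j' [-> hj]]]] _ _.
    + by move: j0 => /= j0; kc.
    + by constructor 1.
    + constructor 3; exists i, j'; split => //; move: hj => /= hj; lia.
  - move=> /adjS [_ [[-> j0]|[-> _]|[j' [-> hj]]]] _ _.
    + by move: j0 => /= j0; kc.
    + by constructor 2.
    + constructor 4; exists i, j'; split => //; move: hj => /= hj; lia.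
move=> /(reach_sub I0 step) [_ vu ruv [t [x [_ Ix axv]]]].
have kv := earlier ruv; rewrite keyV Hl' in kv.
have Wm : forall b w, wV b w -> Wv w \in Wlist n m r' true ++ Wlist n m r' false.
  by move=> b w hw; rewrite mem_cat; case: b hw => hw; rewrite (@Wlist_mem n m r' _ _ hw) ?orbT.
case: Ix axv => [->|[-> _]|[i [j [-> _]]]|[i [j [-> _]]]].
- move=> /adjV [?|[i [j [? _ _]]]|[w [? hw]]]; subst v.
  + by rewrite keyV Hn in kv; kc.
  + by rewrite keyS in kv; have := ordS j; kc.
  + exact: Wm hw.
- move=> /adjV [?|[i [j [? _ _]]]|[w [? hw]]]; subst v.
  + by rewrite negl_neg eqxx in vu.
  + by rewrite keyS in kv; have := ordS j; kc.
  + exact: Wm hw.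
- move=> /adjS [_ [[? _]|[? _]|[j' [? _]]]]; subst v.
  + by rewrite keyU in kv; kc.
  + by rewrite eqxx in vu.
  + by rewrite keyS in kv; have := ordS j'; kc.
- move=> /adjS [_ [[? _]|[? _]|[j' [? _]]]]; subst v.
  + by rewrite keyU in kv; kc.
  + by rewrite keyV Hn in kv; kc.
  + by rewrite keyS in kv; have := ordS j'; kc.
Qed.


Lemma boundU i (hsz : 2 <= size (cl i) <= 3) (hhas : has tr (cl i)) :
  #|reach_set A adj r o (Uv i)| <= 6.
Proof.
pose s := WUlist n m r' (size (cl i) == 2) ++ [seq Vv l | l <- cl i & ~~ tr l].
apply: (@leq_trans (size s)).
  apply: card_le_seq => v; rewrite inE.
  pose I := fun (t:nat) (x:T) => (x = Uv i /\ t = 0) \/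
     exists l j, [/\ x = Sv i l j, l \in cl i & nat_of_ord j < t].
  have I0 : I 0 (Uv i) by left.
  have step : forall t x y, t.+1 < r -> I t x -> adj x y -> y \in A ->
      rk o y < rk o (Uv i) -> I t.+1 y.
    move=> t x y tr' [[-> _]|[l [j [-> li jt]]]].
    - move=> /adjU [[l [j [-> li j0]]]|[w [-> _]]] _ /earlier.
      + by move=> _; right; exists l, j; split=>//; move: j0 => /= ->.
      + by rewrite keyW keyU; kc.
    - move=> /adjS [_ [[-> _]|[-> jr]|[j' [-> hj]]]] _.
      + by rewrite ltnn.
      + by move: jr => /= jr; kc.
      + by move=> _; right; exists l, j'; split => //; move: hj => /= hj; lia.
  move=> /(reach_sub I0 step) [_ vu ruv [t [x [_ Ix axv]]]].
  have kv := earlier ruv; rewrite keyU in kv.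
  case: Ix axv => [[-> _]|[l [j [-> li _]]]].
  - move=> /adjU [[l [j [? _ _]]]|[w [? hw]]]; subst v.
    + by rewrite keyS in kv; have := ordS j; kc.
    + by rewrite mem_cat (@WUlist_mem n m r' _ _ hw).
  - move=> /adjS [_ [[? _]|[? _]|[j' [? _]]]]; subst v.
    + by rewrite eqxx in vu.
    + rewrite keyV in kv; case: (boolP (tr l)) kv => Hl kv; first kc.
      by rewrite mem_cat; apply/orP; right; apply: map_f; rewrite mem_filter Hl.
    + by rewrite keyS in kv; have := ordS j'; kc.
rewrite /s size_cat WUlist_size size_map size_filter.
have e : count tr (cl i) + count (fun l => ~~ tr l) (cl i) = size (cl i) := count_predC tr (cl i).
have : 0 < count tr (cl i) by rewrite -has_count.
move: hsz e; set c2 := count (fun l => ~~ tr l) _; set c1 := count tr _; move: (size _) => sz; case: eqP => /= H; lia.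
Qed.

End B.

Theorem lemma3p14 (r n m : nat) (cl : 'I_m -> seq (lit n)) :
  2 <= r -> two_clause_3sat cl -> satisfiable cl ->
  colnum (@gvset n m r cl) (@gadj n m r cl) r <= 6.
Proof.
case: r => [|[|r']] // _ [h1 _ h3] [a ha].
have [o Ho] := perm_of_key (@key n m r' a).
apply: (colnum_le (o:=o)) => u _.
case: u => [[[i|l]|[[i l] k]]|w].
- exact: (boundU Ho (h1 i) (ha i)).
- case: (boolP (tr a l)) => Hl.
  + exact: (boundVt Ho Hl (h3 l)).
  + exact: (boundVf cl Ho Hl).
- exact: (boundS cl Ho i l k).
- exact: (boundW cl Ho w).
Qed.
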